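(* Let $3\leq m\leq n$, $\ell=m-1$. If $m\leq\rho(n-1)$, then $\mathfrak{C}\not\subset\mathfrak{S}$.
   Context: $\rho$ is the Hurwitz–Radon function: $\rho(k)=2^b+8c$ where $k=(2a+1)2^{b+4c}$, $a,b,c\geq0$ integers, $0\leq b<4$. For $Y=(Y_1;\ldots;Y_\ell)\in\mathbb{R}^{n\times n\times\ell}$ and $\mathbf{a}\in\mathbb{R}^m$, $M(\mathbf{a},Y)=\sum_{k=1}^\ell a_kY_k-a_mE_n$; $\mathfrak{C}=\{Y\mid\det M(\mathbf{a},Y)<0\text{ for some }\mathbf{a}\}$. $V(Y)=\{\mathbf{a}\in\mathbb{R}^n\mid \sum_{k=1}^\ell x_kY_k\mathbf{a}=x_m\mathbf{a}\text{ for some }(x_1,\ldots,x_m)^\top\neq\mathbf{0}\}$, $\hat V(Y)$ its linear span, $\mathfrak{S}=\{Y\mid\dim\hat V(Y)=n\}$. *)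

(* Defs.v *)
From HB Require Import structures.
From mathcomp Require Import all_boot all_order all_algebra.
Set Implicit Arguments. Unset Strict Implicit. Unset Printing Implicit Defensive.
Import Order.TTheory GRing.Theory Num.Theory.
Local Open Scope ring_scope.

(* Hurwitz--Radon function: k = (2a+1) 2^(b+4c), 0 <= b < 4, rho k = 2^b + 8c.
   With e = logn 2 k we have b = e %% 4 and c = e %/ 4. *)
Definition rho (k : nat) : nat :=
  (2 ^ (logn 2 k %% 4) + 8 * (logn 2 k %/ 4))%N.

Section Defs.
Variable R : rcfType.

(* Y = (Y_1; ...; Y_l), a = (a_1, ..., a_{l+1}) with m = l+1;
   the last index ord_max plays the role of a_m. *)
Definition Mmat (l n : nat) (a : 'I_l.+1 -> R) (Y : 'I_l -> 'M[R]_n) : 'M[R]_n :=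
  \sum_(k < l) a (widen_ord (leqnSn l) k) *: Y k - a ord_max *: 1%:M.

Definition inC (l n : nat) (Y : 'I_l -> 'M[R]_n) : Prop :=
  exists a : 'I_l.+1 -> R, \det (Mmat a Y) < 0.

(* V(Y), vectors of R^n represented as row vectors v (acting as columns v^T) *)
Definition Vset (l n : nat) (Y : 'I_l -> 'M[R]_n) (v : 'rV[R]_n) : Prop :=
  exists x : 'I_l.+1 -> R, (exists i, x i != 0) /\
    (\sum_(k < l) x (widen_ord (leqnSn l) k) *: Y k) *m v^T = x ord_max *: v^T.

Definition span_of (n : nat) (S : 'rV[R]_n -> Prop) (w : 'rV[R]_n) : Prop :=
  exists (k : nat) (B : 'M[R]_(k, n)), (forall i, S (row i B)) /\ (w <= B)%MS.

Definition has_dim (n : nat) (U : 'rV[R]_n -> Prop) (d : nat) : Prop :=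
  exists B : 'M[R]_(d, n),
    (forall i, U (row i B)) /\ row_free B /\ (forall w, U w -> (w <= B)%MS).

Definition inS (l n : nat) (Y : 'I_l -> 'M[R]_n) : Prop :=
  has_dim (span_of (Vset Y)) n.

End Defs.

(* Main.v *)
Require Import Defs.
From HB Require Import structures.
From mathcomp Require Import all_boot all_order all_algebra.
From mathcomp Require Import zify.
Set Implicit Arguments. Unset Strict Implicit. Unset Printing Implicit Defensive.
Import Order.TTheory GRing.Theory Num.Theory.
Local Open Scope ring_scope.

Section NC.
Variable T : pzRingType.
Definition anti (x y : T) := x * y == - (y * x).

Lemma antiP x y : reflect (x * y = - (y * x)) (anti x y).
Proof. exact: eqP. Qed.

Lemma anti_sym x y : anti x y -> anti y x.
Proof. by move/antiP=> h; apply/antiP; rewrite h opprK. Qed.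

Lemma AA y u v : anti y u -> anti y v -> GRing.comm y (u * v).
Proof. by move=>/antiP hu /antiP hv; rewrite /GRing.comm mulrA hu mulNr -(mulrA u y v) hv mulrN opprK mulrA. Qed.

Lemma AC y u v : anti y u -> GRing.comm y v -> anti y (u * v).
Proof. by move=>/antiP hu hv; apply/antiP; rewrite mulrA hu mulNr -(mulrA u y v) hv mulrA. Qed.

Lemma CA y u v : GRing.comm y u -> anti y v -> anti y (u * v).
Proof. by move=> hu /antiP hv; apply/antiP; rewrite mulrA hu -(mulrA u y v) hv mulrN mulrA. Qed.

Lemma CC (y u v : T) : GRing.comm y u -> GRing.comm y v -> GRing.comm y (u * v).
Proof. by move=> hu hv; rewrite /GRing.comm mulrA hu -(mulrA u y v) hv mulrA. Qed.

Lemma sq_anti a b : anti a b -> (a * b) * (a * b) = - ((a * a) * (b * b)).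
Proof. by move=>/anti_sym/antiP h; rewrite -mulrA (mulrA b) h mulNr mulrN !mulrA. Qed.
End NC.

Section Cl.
Variable R : rcfType.

Section D.
Variable d : nat.
Local Notation M := ('M[R]_d).
Definition sq (b : bool) : M := if b then -1 else 1.
Definition goodL (L : seq (bool * M)) :=
  all (fun p => p.2 * p.2 == sq p.1) L && pairwise (fun p q => anti p.2 q.2) L.

Lemma goodL_cons p L : goodL (p :: L) =
  [&& p.2 * p.2 == sq p.1, all (fun q => anti p.2 q.2) L & goodL L].
Proof. rewrite /goodL pairwise_cons /=; by case: (_ == _); case: all; case: all; case: pairwise. Qed.
End D.

Section Dbl.
Variable d : nat.
Definition diag2 (x y : 'M[R]_d) : 'M[R]_(d + d) := block_mx x 0 0 y.
Definition dbl x := diag2 x (- x).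
Definition Jm : 'M[R]_(d + d) := block_mx 0 1 (-1) 0.
Definition Qm : 'M[R]_(d + d) := block_mx 0 1 1 0.

Lemma mul_diag2 a b c e : diag2 a b * diag2 c e = diag2 (a * c) (b * e).
Proof. by rewrite -mulmxE /diag2 mulmx_block !(mul0mx, mulmx0, addr0, add0r) !mulmxE. Qed.

Lemma one_block : (1 : 'M[R]_(d + d)) = diag2 1 1.
Proof. exact: (scalar_mx_block d d (1 : R)). Qed.

Lemma diag2_sq b : diag2 (sq d b) (sq d b) = sq (d + d) b.
Proof.
case: b; rewrite /sq one_block //.
by rewrite /diag2 opp_block_mx !oppr0.
Qed.

Lemma opp_diag2 a b : - diag2 a b = diag2 (- a) (- b).
Proof. by rewrite /diag2 opp_block_mx !oppr0. Qed.

Lemma dbl_mul x y : dbl x * dbl y = diag2 (x * y) (x * y).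
Proof. by rewrite /dbl mul_diag2 mulrNN. Qed.

Lemma dbl_sq b x : x * x = sq d b -> dbl x * dbl x = sq (d + d) b.
Proof. by move=> h; rewrite dbl_mul h diag2_sq. Qed.

Lemma dbl_anti x y : anti x y -> anti (dbl x) (dbl y).
Proof. by move/antiP=> h; apply/antiP; rewrite !dbl_mul opp_diag2 h. Qed.

Lemma J_sq : Jm * Jm = sq (d + d) true.
Proof.
rewrite -diag2_sq -mulmxE /Jm mulmx_block /sq /diag2.
by rewrite !(mul0mx, mulmx0, addr0, add0r, mulmx1, mul1mx, mulmxN, mulNmx).
Qed.

Lemma Q_sq : Qm * Qm = sq (d + d) false.
Proof.
rewrite -diag2_sq -mulmxE /Qm mulmx_block /sq /diag2.
by rewrite !(mul0mx, mulmx0, addr0, add0r, mulmx1, mul1mx, mulmxN, mulNmx).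
Qed.

Lemma QJ_anti : anti Qm Jm.
Proof.
apply/antiP; rewrite -!mulmxE /Qm /Jm !mulmx_block opp_block_mx.
by rewrite !(mul0mx, mulmx0, addr0, add0r, mulmx1, mul1mx, mulmxN, mulNmx, oppr0, opprK).
Qed.

Lemma dblQ_anti x : anti Qm (dbl x).
Proof.
apply/antiP; rewrite -!mulmxE /Qm /dbl /diag2 !mulmx_block opp_block_mx.
by rewrite !(mul0mx, mulmx0, addr0, add0r, mulmx1, mul1mx, mulmxN, mulNmx, oppr0, opprK).
Qed.

Lemma dblJ_anti x : anti (dbl x) Jm.
Proof.
apply/antiP; rewrite -!mulmxE /Jm /dbl /diag2 !mulmx_block opp_block_mx.
by rewrite !(mul0mx, mulmx0, addr0, add0r, mulmx1, mul1mx, mulmxN, mulNmx, oppr0, opprK).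
Qed.

Definition dblL (L : seq (bool * 'M[R]_d)) : seq (bool * 'M[R]_(d + d)) :=
  (false, Qm) :: (map (fun p => (p.1, dbl p.2)) L ++ [:: (true, Jm)]).

Lemma goodL_dbl L : goodL L -> goodL (dblL L).
Proof.
move=> /andP [hs hp]; apply/andP; split.
  rewrite /= Q_sq eqxx /= all_cat /= J_sq eqxx andbT all_map andbT.
  by apply/allP=> p /(allP hs) /eqP /= h; rewrite (dbl_sq h).
rewrite /dblL pairwise_cons pairwise_cat all_cat /= QJ_anti andbT all_map.
rewrite andbT andbT; apply/and3P; split.
- by apply/allP=> p _ /=; apply: dblQ_anti.
- by rewrite allrel1r all_map; apply/allP => p _ /=; apply: dblJ_anti.
- by rewrite pairwise_map; apply: sub_pairwise hp => p q /= /dbl_anti.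
Qed.

Lemma count_dblL L : count fst (dblL L) = (count fst L).+1.
Proof. by rewrite /= count_cat count_map /= addn1. Qed.
End Dbl.
End Cl.

Section S4.
Variable R : rcfType.
Variable d : nat.
Local Notation M := ('M[R]_d).

Lemma comm_sym (x y : M) : GRing.comm x y -> GRing.comm y x.
Proof. by rewrite /GRing.comm. Qed.

Section W.
Variables a b c e : M.
Hypotheses (ab : anti a b) (ac : anti a c) (ae : anti a e)
           (bc : anti b c) (be : anti b e) (ce : anti c e).
Let w := (a * b) * (c * e).
Lemma aw : anti a w.
Proof. exact: AC (CA (erefl _) ab) (AA ac ae). Qed.
Lemma bw : anti b w.
Proof. exact: AC (AC (anti_sym ab) (erefl _)) (AA bc be). Qed.
Lemma cw : anti c w.
Proof. exact: CA (AA (anti_sym ac) (anti_sym bc)) (CA (erefl _) ce). Qed.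
Lemma ew : anti e w.
Proof. exact: CA (AA (anti_sym ae) (anti_sym be)) (AC (anti_sym ce) (erefl _)). Qed.
Lemma yw y : anti y a -> anti y b -> anti y c -> anti y e -> GRing.comm y w.
Proof. by move=> ya yb yc ye; apply: CC; apply: AA. Qed.
Lemma ww : w * w = ((a * b) * (a * b)) * ((c * e) * (c * e)).
Proof.
have h : GRing.comm (c * e) (a * b).
  by apply: CC; apply: comm_sym; apply: AA.
rewrite /w; move: h; set u := a * b; set v := c * e => h.
by rewrite -mulrA (mulrA v u v) h !mulrA.
Qed.
End W.

Lemma flip_sq (x w : M) : anti x w -> w * w = 1 -> (x * w) * (x * w) = - (x * x).
Proof.
move=> /anti_sym /antiP h ww1.
by rewrite -mulrA (mulrA w x w) h mulNr mulrN -(mulrA x w w) ww1 mulr1.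
Qed.

Lemma flip_anti (x y w : M) : anti x w -> anti y w -> w * w = 1 -> anti x y ->
  anti (x * w) (y * w).
Proof.
move=> /antiP xw /antiP yw ww1 /antiP xy; apply/antiP.
have E u v : anti v w -> (u * w) * (v * w) = - (u * v).
  move=> /anti_sym /antiP vw.
  by rewrite -mulrA (mulrA w v w) vw mulNr mulrN -(mulrA v w w) ww1 mulr1.
rewrite E; last by apply/antiP.
by rewrite E ?xy //; apply/antiP.
Qed.

Lemma flip_other (x y w : M) : anti y x -> GRing.comm y w -> anti (x * w) y.
Proof. by move=> yx yw; apply: anti_sym; apply: AC. Qed.

Lemma sqf b : sq R d b * sq R d b = 1.
Proof. by case: b; rewrite /sq ?mulrNN mulr1. Qed.

Lemma sqsq (x y : M) b : x * x = sq R d b -> y * y = sq R d b -> anti x y ->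
  (x * y) * (x * y) = -1.
Proof. by move=> hx hy /sq_anti ->; rewrite hx hy sqf. Qed.

Definition S4f (L : seq (bool * M)) : seq (bool * M) :=
  match L with
  | (false, a) :: (false, b) :: (false, c) :: (false, e) :: L' =>
      let w := (a * b) * (c * e) in
      (true, a * w) :: (true, b * w) :: (true, c * w) :: (true, e * w) :: L'
  | _ => L
  end.

Lemma goodL_S4 a b c e L :
  goodL ((false, a) :: (false, b) :: (false, c) :: (false, e) :: L) ->
  goodL (S4f ((false, a) :: (false, b) :: (false, c) :: (false, e) :: L)).
Proof.
rewrite /S4f !goodL_cons /=.
move=> /andP[/eqP sa /andP[/and4P[ab ac ae aL] /andP[/eqP sb /andP[/and3P[bc be bL]
  /andP[/eqP sc /andP[/andP[ce cL] /andP[/eqP se /andP[eL gL]]]]]]]].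
set w := (a * b) * (c * e).
have w1 : w * w = 1.
  rewrite /w ww //; rewrite (sqsq (b:=false)) //; rewrite (sqsq (b:=false)) //.
  by rewrite mulrNN mulr1.
have Aw : anti a w by apply: aw.
have Bw : anti b w by apply: bw.
have Cw : anti c w by apply: cw.
have Ew : anti e w by apply: ew.
have qw q : q \in L -> GRing.comm q.2 w.
  move=> qL; apply: yw; apply: anti_sym.
  - exact: (allP aL).
  - exact: (allP bL).
  - exact: (allP cL).
  - exact: (allP eL).
have allL x : all (fun q => anti x q.2) L -> all (fun q => anti (x * w) q.2) L.
  move=> xL; apply/allP=> q qL; apply: flip_other; last exact: qw.
  by apply: anti_sym; apply: (allP xL).
rewrite (flip_sq Aw w1) (flip_sq Bw w1) (flip_sq Cw w1) (flip_sq Ew w1) sa sb sc se !eqxx !allL // gL !flip_anti //.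
Qed.

End S4.

Section Base.
Variable R : rcfType.

Definition Cl (d k : nat) := exists L : seq (bool * 'M[R]_d), goodL L /\ (k <= count fst L)%N.

Lemma goodL_filter d (L : seq (bool * 'M[R]_d)) : goodL L -> goodL (filter fst L).
Proof.
case/andP=> ha hp; apply/andP; split; last exact: pairwise_filter.
by apply/allP=> p; rewrite mem_filter => /andP[_ /(allP ha)].
Qed.

Lemma ext2 d (a b : 'M[R]_d) : goodL [:: (true, a); (true, b)] ->
  goodL [:: (true, a * b); (true, a); (true, b)].
Proof.
rewrite !goodL_cons /= !andbT => /and3P[/eqP sa ab /eqP sb].
rewrite (sqsq (b:=true)) // sa sb ab !eqxx /= !andbT.
apply/andP; split; apply: anti_sym.
- exact: CA (erefl _) ab.
- exact: AC (anti_sym ab) (erefl _).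
Qed.

Lemma ext4 d (a b c e : 'M[R]_d) s1 s2 :
  goodL [:: (s1, a); (s1, b); (s2, c); (s2, e)] ->
  goodL [:: (false, (a * b) * (c * e)); (s1, a); (s1, b); (s2, c); (s2, e)].
Proof.
move=> G; rewrite goodL_cons G andbT; move: G.
rewrite !goodL_cons /= !andbT => /andP[/eqP sa /andP[/and3P[ab ac ae]
  /andP[/eqP sb /andP[/andP[bc be] /andP[/eqP sc /andP[ce /eqP se]]]]]].
rewrite ww // (sqsq (b:=s1)) // (sqsq (b:=s2)) // mulrNN mulr1 eqxx /=.
apply/and4P; split; apply: anti_sym.
- exact: aw.
- exact: bw.
- exact: cw.
- exact: ew.
Qed.

Lemma Cl_1_0 : Cl 1 0.
Proof. by exists [::]. Qed.

Lemma Cl_2_1 : Cl 2 1.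
Proof.
exists (dblL ([::] : seq (bool * 'M[R]_1))); split; first exact: (@goodL_dbl R 1 [::] isT).
by [].
Qed.

Lemma Cl_4_3 : Cl 4 3.
Proof.
have G : goodL (dblL (dblL ([::] : seq (bool * 'M[R]_1)))).
  by do 2 apply: goodL_dbl.
move/goodL_filter: G; rewrite /dblL /= => G.
by eexists; split; first exact: ext2 G.
Qed.

Lemma Cl_8_7 : Cl 8 7.
Proof.
have G : goodL (dblL (dblL ([::] : seq (bool * 'M[R]_1)))).
  by do 2 apply: goodL_dbl.
move: G; rewrite /dblL /= => /ext4/goodL_dbl; rewrite /dblL /= => /goodL_S4 G.
by eexists; split; first exact: G.
Qed.

Lemma count_S4 d (a b c e : 'M[R]_d) L :
  count fst (S4f [:: (false, a), (false, b), (false, c), (false, e) & L]) =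
  (count fst [:: (false, a), (false, b), (false, c), (false, e) & L] + 4)%N.
Proof. rewrite /=; lia. Qed.

Lemma shape4 d (L : seq (bool * 'M[R]_d)) : exists a b c e rest,
  dblL (dblL (dblL (dblL L))) = [:: (false, a), (false, b), (false, c), (false, e) & rest].
Proof. by rewrite /dblL /=; do 5 eexists. Qed.

Lemma Cl_per d k : Cl d k -> Cl (16 * d) (k + 8).
Proof.
case=> L [G c].
have -> : (16 * d = (((d + d) + (d + d)) + ((d + d) + (d + d))) +
                    (((d + d) + (d + d)) + ((d + d) + (d + d))))%N by lia.
have G4 : goodL (dblL (dblL (dblL (dblL L)))) by do 4 apply: goodL_dbl.
have C4 : count fst (dblL (dblL (dblL (dblL L)))) = (count fst L + 4)%N.
  by rewrite !count_dblL addn4.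
have [a [b [cc [e [rest E]]]]] := shape4 L.
rewrite E in G4 C4.
exists (S4f [:: (false, a), (false, b), (false, cc), (false, e) & rest]); split.
  exact: goodL_S4.
rewrite count_S4 C4; lia.
Qed.
End Base.

Section NE.
Variable R : rcfType.

Definition NE k d (A : 'I_k -> 'M[R]_d) := forall (x : 'I_k -> R) (lam : R) (v : 'rV[R]_d),
  (\sum_i x i *: A i) *m v^T = lam *: v^T -> v = 0 \/ ((forall i, x i = 0) /\ lam = 0).

Lemma half_cancel d (X Y : 'M[R]_d) : X *+ 2 = Y *+ 2 -> X = Y.
Proof.
rewrite -!scaler_nat => /(congr1 (fun Z => (2%:R : R)^-1 *: Z)).
by rewrite !scalerA mulVf ?pnatr_eq0 // !scale1r.
Qed.

Lemma sq_sum k d (A : 'I_k -> 'M[R]_d) (x : 'I_k -> R) :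
  (forall i, A i *m A i = - 1%:M) ->
  (forall i j, i != j -> A i *m A j = - (A j *m A i)) ->
  (\sum_i x i *: A i) *m (\sum_i x i *: A i) = - ((\sum_i x i ^+ 2) *: (1%:M : 'M[R]_d)).
Proof.
move=> Asq Aanti.
set P := fun i j => (x i * x j) *: (A i *m A j).
have E1 : (\sum_i x i *: A i) *m (\sum_i x i *: A i) = \sum_i \sum_j P i j.
  rewrite mulmx_suml; apply: eq_bigr => i _; rewrite mulmx_sumr.
  by apply: eq_bigr => j _; rewrite /P -scalemxAl -scalemxAr scalerA.
rewrite E1; apply: half_cancel.
have E2 : \sum_i \sum_j P i j = \sum_i \sum_j P j i by rewrite exchange_big.
rewrite mulr2n {2}E2 -big_split /=.
rewrite scaler_suml -sumrN -sumrMnl; apply: eq_bigr => i _.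
rewrite -big_split /= (bigD1 i) //= big1 ?addr0.
  by rewrite /P Asq -mulr2n expr2 scalerN.
move=> j ji; rewrite /P [x j * x i]mulrC -scalerDr Aanti 1?eq_sym // addNr scaler0 //.
Qed.

End NE.

Section NE2.
Variable R : rcfType.

Lemma NE_cliff k d (A : 'I_k -> 'M[R]_d) :
  (forall i, A i *m A i = - 1%:M) ->
  (forall i j, i != j -> A i *m A j = - (A j *m A i)) -> NE A.
Proof.
move=> Asq Aanti x lam v H.
have MM := sq_sum x Asq Aanti.
have H2 : (\sum_i x i *: A i) *m ((\sum_i x i *: A i) *m v^T) = lam ^+ 2 *: v^T.
  by rewrite H -scalemxAr H scalerA expr2.
rewrite mulmxA MM mulNmx -scalemxAl mul1mx in H2.
move/eqP: H2; rewrite eq_sym -subr_eq0 opprK -scalerDl scaler_eq0.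
case/orP=> [|/eqP vT]; last by left; apply: trmx_inj; rewrite vT trmx0.
rewrite paddr_eq0 ?sqr_ge0 ?sumr_ge0 // => [/andP[l0 /eqP s0]|i _]; last exact: sqr_ge0.
right; split; last by move: l0; rewrite sqrf_eq0 => /eqP.
move=> i; have /psumr_eq0P := s0; move=> h.
by apply/eqP; rewrite -sqrf_eq0 h // => j _; apply: sqr_ge0.
Qed.

Lemma NE_of_Cl d k : Cl R d k -> exists A : 'I_k -> 'M[R]_d, NE A.
Proof.
case=> L [/andP[Ga Gp] c].
set s := [seq p.2 | p <- L & p.1].
have ss : size s = count fst L by rewrite size_map size_filter.
have sp : pairwise (@anti _) s.
  by rewrite pairwise_map; apply: pairwise_filter.
have sin y : y \in s -> y * y = -1.
  case/mapP=> p; rewrite mem_filter => /andP[p1 pL] ->.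
  by move/allP: Ga => /(_ _ pL) /eqP; rewrite p1.
have ik (i : 'I_k) : (i < size s)%N by rewrite ss (leq_trans (ltn_ord i) c).
exists (fun i => s`_i); apply: NE_cliff.
  by move=> i; rewrite mulmxE sin // mem_nth.
move=> i j ij; rewrite !mulmxE; apply/antiP.
have [lt|gt] := ltnP i j.
  by move/pairwiseP: sp => /(_ 0 i j); apply => //; by rewrite inE ik.
have lt : (j < i)%N by rewrite ltn_neqAle eq_sym gt andbT; apply: contra ij => /eqP/val_inj ->.
apply: anti_sym; move/pairwiseP: sp => /(_ 0 j i); apply => //; by rewrite inE ik.
Qed.
End NE2.

Section F.
Variable R : rcfType.

Lemma sum_block k d1 d2 (F : 'I_k -> 'M[R]_d1) (G : 'I_k -> 'M[R]_d2) :
  \sum_i block_mx (F i) 0 0 (G i) = block_mx (\sum_i F i) 0 0 (\sum_i G i).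
Proof.
elim/big_rec3: _ => [|i A B C _ ->]; first by rewrite block_mx0.
by rewrite add_block_mx !addr0.
Qed.

Lemma NE_block k d1 d2 (A : 'I_k -> 'M[R]_d1) (B : 'I_k -> 'M[R]_d2) :
  NE A -> NE B -> NE (fun i => block_mx (A i) 0 0 (B i)).
Proof.
move=> NA NB x lam v.
rewrite -[v]hsubmxK tr_row_mx.
under eq_bigr do rewrite scale_block_mx !scaler0.
rewrite sum_block mul_block_col !mul0mx addr0 add0r scale_col_mx.
case/eq_col_mx => /NA h1 /NB h2.
case: h1 => [->|]; last by right.
case: h2 => [->|]; last by right.
by left; rewrite row_mx0.
Qed.

Lemma NE_mult k d q : (exists A : 'I_k -> 'M[R]_d, NE A) ->
  exists A : 'I_k -> 'M[R]_(d * q), NE A.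
Proof.
move=> [A NA]; elim: q => [|q [B NB]].
  exists (fun _ => 0) => x lam v _; left; apply/rowP => i.
  by have := ltn_ord i; rewrite [X in (_ < X)%N]muln0.
rewrite mulnS; exists (fun i => block_mx (A i) 0 0 (B i)); exact: NE_block.
Qed.

Lemma Cl_le d k k' : Cl R d k -> (k' <= k)%N -> Cl R d k'.
Proof. by case=> L [G c] h; exists L; split => //; apply: leq_trans c. Qed.

Lemma Cl_bc b c : (b < 4)%N -> Cl R (2 ^ (b + 4 * c)) (2 ^ b - 1 + 8 * c).
Proof.
move=> hb; elim: c => [|c IH].
  rewrite muln0 addn0 muln0 addn0.
  case: b hb => [|[|[|[|b]]]] // _.
  - exact: Cl_1_0.
  - exact: Cl_2_1.
  - exact: Cl_4_3.
  - exact: Cl_8_7.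
have -> : (2 ^ (b + 4 * c.+1) = 16 * 2 ^ (b + 4 * c))%N.
  by rewrite mulnS addnCA expnD.
have -> : (2 ^ b - 1 + 8 * c.+1 = (2 ^ b - 1 + 8 * c) + 8)%N by rewrite mulnS; lia.
exact: Cl_per.
Qed.
End F.

Section G.
Variable R : rcfType.

Lemma sum_block0 k d (G : 'I_k -> 'M[R]_d) :
  \sum_i block_mx (0 : 'M[R]_1) 0 0 (G i) = block_mx 0 0 0 (\sum_i G i).
Proof. by rewrite sum_block big1. Qed.

Lemma V_sub l N (A : 'I_l -> 'M[R]_N) : NE A ->
  forall v, Vset (fun i => (block_mx (0 : 'M[R]_1) 0 0 (A i) : 'M[R]_(1 + N))) v ->
  (v <= (row_mx 1 0 : 'M[R]_(1, 1 + N)))%MS.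
Proof.
move=> NA v [x [[i xi] H]].
move: H; rewrite -[v]hsubmxK tr_row_mx.
under eq_bigr do rewrite scale_block_mx !scaler0.
rewrite sum_block0 mul_block_col !mul0mx addr0 add0r scale_col_mx.
case/eq_col_mx => _ /NA [v2|[x0 l0]].
  rewrite v2 (_ : row_mx (lsubmx v) 0 = lsubmx v *m row_mx 1 0) ?submxMl //.
  by rewrite mul_mx_row mulmx1 mulmx0.
exfalso; move/eqP: xi; apply.
have [->|ne] := eqVneq i ord_max; first by [].
have hi : (i < l)%N.
  by rewrite ltn_neqAle -ltnS ltn_ord andbT; apply: contra ne => /eqP h; apply/eqP/val_inj.
by rewrite -(x0 (Ordinal hi)); congr x; apply: val_inj.
Qed.
End G.

Theorem mainTheorem11 (R : rcfType) (m n : nat) :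
  (3 <= m)%N -> (m <= n)%N -> (m <= rho (n - 1))%N ->
  exists Y : 'I_(m.-1) -> 'M[R]_n, inC Y /\ ~ inS Y.
Proof.
move=> m3; case: n => [|N] mn; first by lia.
rewrite subSS subn0 => hr.
set e := logn 2 N.
have hr' : (m <= 2 ^ (e %% 4) + 8 * (e %/ 4))%N by [].
have e1 : (0 < e)%N.
  rewrite lt0n; apply/eqP => e0; move: hr'; rewrite e0 mod0n div0n expn0; lia.
have N0 : (0 < N)%N.
  by rewrite lt0n; apply/eqP => N0; move: e1; rewrite /e N0 logn0.
have CL : Cl R (2 ^ e) m.-1.
  have h4 : (e %% 4 + 4 * (e %/ 4) = e)%N by lia.
  have := @Cl_bc R (e %% 4) (e %/ 4) (ltn_pmod e (isT : (0 < 4)%N)); rewrite h4 => C.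
  apply: (@Cl_le R _ _ _ C); move: hr'; lia.
have dN : (2 ^ e * (N %/ 2 ^ e) = N)%N by rewrite mulnC divnK // pfactor_dvdnn.
move: (NE_mult (N %/ 2 ^ e) (NE_of_Cl CL)); rewrite dN => -[A NA].
exists (fun i => (block_mx (0 : 'M[R]_1) 0 0 (A i) : 'M[R]_(1 + N))); split.
  exists (fun i : 'I_(m.-1).+1 => if i == ord_max then 1 else 0).
  rewrite /Mmat big1 => [|k _]; last first.
    rewrite (_ : (widen_ord _ k == ord_max) = false) ?scale0r //.
    by apply/negbTE; rewrite -val_eqE /= neq_ltn ltn_ord.
  rewrite eqxx scale1r sub0r -scaleN1r scalemx1 det_scalar -signr_odd /=.
  have : (2 %| N)%N.
    apply: dvdn_trans (pfactor_dvdnn 2 N); exact: dvdn_exp e1 (dvdnn 2).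
  by rewrite dvdn2 => /negbTE ->; rewrite expr1 ltrN10.
move=> [B [Brow [Bfree _]]].
set E := (row_mx 1 0 : 'M[R]_(1, 1 + N)).
have sub w : span_of (Vset (fun i => (block_mx (0 : 'M[R]_1) 0 0 (A i) : 'M[R]_(1 + N)))) w ->
    (w <= E)%MS.
  move=> [k [C [Crow wC]]]; apply: submx_trans wC _; apply/row_subP => i.
  exact: V_sub NA _ (Crow i).
have BE : (B <= E)%MS by apply/row_subP => i; apply: sub; exact: Brow.
have := mxrankS BE; rewrite (eqP Bfree) => h.
move: (leq_trans h (rank_leq_row E)); rewrite ltnS leqn0 => /eqP N00; by move: N0; rewrite N00.
Qed.
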